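(* Let $C$ and $C'$ be configurations of 2REG that are both convex, let $v\in C$, and let $t\ge0$ be an integer with $\mathrm{d}_C((0,0),v)\le t$. Then $C\equiv'_{t,v}C'$ if and only if $C'$ is a consistent extension of the subset $M(v,t,C)$ of $C$.
   Context: Positions are elements of $\mathbb{Z}^2$; with $\epsilon_0=(1,0)$, $\epsilon_1=(0,1)$, $\epsilon_2=(-1,0)$, $\epsilon_3=(0,-1)$, positions $p,p'$ are adjacent if $p'-p$ is one of the $\epsilon_i$. A path is a nonempty sequence of positions with consecutive positions adjacent. A configuration of 2REG is a finite set $C\subseteq\mathbb{Z}^2$ containing $(0,0)$ in which any two elements are joined by a path inside $C$. A set $X\subseteq\mathbb{Z}^2$ is convex if for any $v,v'\in X$, every shortest path between $v$ and $v'$ in $\mathbb{Z}^2$ lies in $X$. For $p,p'\in C$, $\mathrm{d}_C(p,p')$ is the number of steps of a shortest path from $p$ to $p'$ inside $C$. For $p\in C$, $\mathrm{bc}_C(p)=(b_0,\dots,b_3)\in\{0,1\}^4$ with $b_i=1$ iff $p+\epsilon_i\in C$. $\mathrm{ai}(v,t,C)$ is the symbol $\mathrm{Q}$ if $\mathrm{d}_C((0,0),v)>t$, and otherwise the triple $(t,v,\{(v',\mathrm{bc}_C(v')) : v'\in C,\ \mathrm{d}_C((0,0),v')+\mathrm{d}_C(v',v)\le t\})$. $C\equiv'_{t,v}C'$ means $v\in C\cap C'$ and $\mathrm{ai}(v,t,C)=\mathrm{ai}(v,t,C')\neq\mathrm{Q}$. $M(v,t,C)=\{v'\in C:\mathrm{d}_C((0,0),v')+\mathrm{d}_C(v',v)\le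 t\}$. $C'$ is a consistent extension of a subset $M$ of $C$ if $M\subseteq C'$ and $\mathrm{bc}_C(w)=\mathrm{bc}_{C'}(w)$ for all $w\in M$. *)

(* Defs.v *)
From Stdlib Require Import ZArith List Arith ClassicalEpsilon.
Import ListNotations.
Open Scope Z_scope.

Definition pos := (Z * Z)%type.
Definition origin : pos := (0, 0).

Definition eps (i : nat) : pos :=
  match i with
  | 0%nat => (1, 0)
  | 1%nat => (0, 1)
  | 2%nat => (-1, 0)
  | _ => (0, -1)
  end.

Definition padd (p q : pos) : pos := (fst p + fst q, snd p + snd q).

Definition adjacent (p p' : pos) : Prop :=
  exists i, (i < 4)%nat /\ p' = padd p (eps i).

Fixpoint chain (l : list pos) : Prop :=
  match l with
  | x :: ((y :: _) as r) => adjacent x y /\ chain r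
  | _ => True
  end.

Definition path_in (X : pos -> Prop) (p q : pos) (n : nat) : Prop :=
  exists l : list pos,
    length l = S n /\ hd p l = p /\ last l p = q /\
    chain l /\ (forall x, In x l -> X x).

Definition finite_set (C : pos -> bool) : Prop :=
  exists l : list pos, forall x, C x = true -> In x l.

Definition mem (C : pos -> bool) : pos -> Prop := fun x => C x = true.

Definition configuration (C : pos -> bool) : Prop :=
  finite_set C /\ C origin = true /\
  (forall p q, C p = true -> C q = true -> exists n, path_in (mem C) p q n).

(* shortest paths in Z^2 *)
Definition plane : pos -> Prop := fun _ => True.

Definition convex (X : pos -> bool) : Prop :=
  forall v v', X v = true -> X v' = true ->
    forall l : list pos,
      l <> [] -> hd v l = v -> last l v = v' -> chain l ->
      (forall m, path_in plane v v' m -> (length l - 1 <= m)%nat) ->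
      forall x, In x l -> X x = true.

Definition is_dist (C : pos -> bool) (p q : pos) (n : nat) : Prop :=
  path_in (mem C) p q n /\ forall m, path_in (mem C) p q m -> (n <= m)%nat.

Definition dist (C : pos -> bool) (p q : pos) : nat :=
  epsilon (inhabits 0%nat) (is_dist C p q).

Definition bcode := (bool * bool * bool * bool)%type.

Definition bc (C : pos -> bool) (p : pos) : bcode :=
  (C (padd p (eps 0)), C (padd p (eps 1)), C (padd p (eps 2)), C (padd p (eps 3))).

Inductive AI : Type :=
  | Qsym : AI
  | Info : nat -> pos -> ((pos * bcode) -> Prop) -> AI.

Definition ai (v : pos) (t : nat) (C : pos -> bool) : AI :=
  if Nat.ltb t (dist C origin v) then Qsym
  else Info t v (fun pb => C (fst pb) = true /\
                   (dist C origin (fst pb) + dist C (fst pb) v <= t)%nat /\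
                   snd pb = bc C (fst pb)).

Definition equiv' (t : nat) (v : pos) (C C' : pos -> bool) : Prop :=
  C v = true /\ C' v = true /\ ai v t C = ai v t C' /\ ai v t C <> Qsym.

Definition Mset (v : pos) (t : nat) (C : pos -> bool) : pos -> Prop :=
  fun v' => C v' = true /\ (dist C origin v' + dist C v' v <= t)%nat.

Definition consistent_extension (C : pos -> bool) (M : pos -> Prop) (C' : pos -> bool) : Prop :=
  (forall w, M w -> C' w = true) /\ (forall w, M w -> bc C w = bc C' w).

(* Main.v *)
Require Import Defs.
From Stdlib Require Import ZArith List Arith Lia.
From Stdlib Require Import ClassicalEpsilon FunctionalExtensionality PropExtensionality.
Import ListNotations.

Definition manh (p q : pos) : nat :=
  Z.to_nat (Z.abs (fst q - fst p) + Z.abs (snd q - snd p)).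

Lemma manh_sym p q : manh p q = manh q p.
Proof. destruct p, q; unfold manh; simpl; lia. Qed.

Lemma manh_0 p q : manh p q = 0%nat -> p = q.
Proof. destruct p, q; unfold manh; simpl; intros; f_equal; lia. Qed.

Lemma manh_refl p : manh p p = 0%nat.
Proof. destruct p; unfold manh; simpl; lia. Qed.

Lemma manh_adj p i q : (i < 4)%nat ->
  (manh p q <= S (manh (padd p (eps i)) q))%nat /\
  (manh (padd p (eps i)) q <= S (manh p q))%nat.
Proof.
  intros Hi; destruct p, q; unfold manh, padd.
  destruct i as [|[|[|[|i]]]]; simpl; try lia.
Qed.

Lemma last_d {A} (x : A) r d d' : last (x :: r) d = last (x :: r) d'.
Proof.
  revert x; induction r as [|y r IH]; intros x; [reflexivity|].
  exact (IH y).
Qed.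

Lemma chain_lower r : forall x, chain (x :: r) -> (manh x (last (x :: r) x) <= length r)%nat.
Proof.
  induction r as [|y r IH]; intros x Hc.
  - change (last [x] x) with x. rewrite manh_refl; simpl; lia.
  - destruct Hc as [[i [Hi ->]] Hc].
    specialize (IH _ Hc).
    change (last (x :: padd x (eps i) :: r) x) with (last (padd x (eps i) :: r) x).
    rewrite (last_d _ _ x (padd x (eps i))).
    destruct (manh_adj x i (last (padd x (eps i) :: r) (padd x (eps i))) Hi).
    change (length (padd x (eps i) :: r)) with (S (length r)); lia.
Qed.

Lemma path_lower X p q m : path_in X p q m -> (manh p q <= m)%nat.
Proof.
  intros [l [Hlen [Hhd [Hlast [Hc _]]]]].
  destruct l as [|x r]; [discriminate|].
  simpl in Hhd, Hlen. subst x. subst q.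
  pose proof (chain_lower r p Hc). lia.
Qed.

Lemma step p q : p <> q -> exists i, (i < 4)%nat /\ S (manh (padd p (eps i)) q) = manh p q.
Proof.
  destruct p as [a b], q as [c d]; intros Hne; unfold manh, padd; simpl.
  destruct (Z_lt_le_dec a c).
  { exists 0%nat; simpl; split; [lia|]. lia. }
  destruct (Z_lt_le_dec c a).
  { exists 2%nat; simpl; split; [lia|]. lia. }
  destruct (Z_lt_le_dec b d).
  { exists 1%nat; simpl; split; [lia|]. lia. }
  destruct (Z_lt_le_dec d b).
  { exists 3%nat; simpl; split; [lia|]. lia. }
  exfalso; apply Hne; f_equal; lia.
Qed.

Lemma stair n : forall p q, manh p q = n ->
  exists r, length r = n /\ chain (p :: r) /\ last (p :: r) p = q.
Proof.
  induction n as [|n IH]; intros p q H.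
  - exists []. split; [reflexivity|]. split; [exact I|].
    change (p = q). apply manh_0; auto.
  - assert (p <> q) by (intro E; subst; rewrite manh_refl in H; discriminate).
    destruct (step p q H0) as [i [Hi Hs]].
    destruct (IH (padd p (eps i)) q ltac:(lia)) as [r [Hl [Hc Hla]]].
    exists (padd p (eps i) :: r); simpl; repeat split; auto.
    + exists i; auto.
    + change (last (padd p (eps i) :: r) p = q).
      rewrite (last_d _ _ p (padd p (eps i))); auto.
Qed.

Lemma convex_path (C : pos -> bool) p q : convex C -> C p = true -> C q = true ->
  forall r, length r = manh p q -> chain (p :: r) -> last (p :: r) p = q ->
  forall x, In x (p :: r) -> C x = true.
Proof.
  intros Hcv Hp Hq r Hl Hc Hla.
  apply (Hcv p q Hp Hq (p :: r)).
  - discriminate.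
  - reflexivity.
  - exact Hla.
  - exact Hc.
  - intros m Hm. apply path_lower in Hm. simpl. lia.
Qed.

Lemma dist_manh (C : pos -> bool) p q : convex C -> C p = true -> C q = true ->
  dist C p q = manh p q.
Proof.
  intros Hcv Hp Hq.
  assert (Hd : is_dist C p q (manh p q)).
  { destruct (stair _ p q eq_refl) as [r [Hl [Hc Hla]]].
    split.
    - exists (p :: r). split; [simpl; rewrite Hl; reflexivity|].
      split; [reflexivity|]. split; [exact Hla|]. split; [exact Hc|].
      intros x Hx. unfold mem. exact (convex_path C p q Hcv Hp Hq r Hl Hc Hla x Hx).
    - intros m Hm; eapply path_lower; eauto. }
  unfold dist.
  pose proof (epsilon_spec (inhabits 0%nat) (is_dist C p q) (ex_intro _ _ Hd)) as Hs.
  destruct Hs as [Hs1 Hs2]. destruct Hd as [Hd1 Hd2].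
  apply Hs2 in Hd1. apply Hd2 in Hs1. lia.
Qed.

Definition opp (i : nat) : nat :=
  match i with 0%nat => 2%nat | 1%nat => 3%nat | 2%nat => 0%nat | _ => 1%nat end.

Lemma padd_opp w i : (i < 4)%nat -> padd (padd w (eps i)) (eps (opp i)) = w.
Proof.
  intros Hi; destruct w; unfold padd.
  destruct i as [|[|[|[|i]]]]; simpl; try lia; f_equal; lia.
Qed.

Lemma bc_comp (C C' : pos -> bool) u j : bc C u = bc C' u ->
  C (padd u (eps j)) = C' (padd u (eps j)).
Proof.
  unfold bc; intros H; injection H; intros.
  destruct j as [|[|[|[|j]]]]; simpl in *; auto.
Qed.

Theorem theorem2 (C C' : pos -> bool) (v : pos) (t : nat) :
  configuration C -> configuration C' -> convex C -> convex C' ->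
  C v = true -> (dist C origin v <= t)%nat ->
  (equiv' t v C C' <-> consistent_extension C (Mset v t C) C').
Proof.
  intros [_ [HC0 _]] [_ [HC'0 _]] Hcv Hcv' Hv Ht.
  assert (Hlt : Nat.ltb t (dist C origin v) = false) by (apply Nat.ltb_ge; lia).
  split.
  - intros [_ [Hv' [Heq _]]].
    unfold ai in Heq. rewrite Hlt in Heq.
    destruct (Nat.ltb t (dist C' origin v)); [discriminate|].
    injection Heq as Heq.
    assert (K : forall w, Mset v t C w -> C' w = true /\ bc C w = bc C' w).
    { intros w Hw.
      pose proof (f_equal (fun f => f (w, bc C w)) Heq) as E. simpl in E.
      assert (Hp : C w = true /\ (dist C origin w + dist C w v <= t)%nat /\ bc C w = bc C w)
        by (destruct Hw; auto).
      rewrite E in Hp. destruct Hp as [A [_ B]]; auto. }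
    split; intros w Hw; apply K; auto.
  - intros [Hext1 Hext2].
    assert (HvM : Mset v t C v).
    { split; auto. rewrite (dist_manh C v v), manh_refl; auto. lia. }
    assert (Hv' := Hext1 v HvM).
    assert (Key : forall n w, manh origin w = n -> C' w = true ->
               (manh origin w + manh w v <= t)%nat -> C w = true).
    { induction n as [|n IH]; intros w Hn Hw Hwt.
      - apply manh_0 in Hn; subst; auto.
      - assert (Hne : w <> origin) by (intro E; subst; rewrite manh_refl in Hn; discriminate).
        destruct (step w origin Hne) as [i [Hi Hs]].
        set (u := padd w (eps i)) in *.
        rewrite manh_sym in Hn.
        destruct (stair _ u origin eq_refl) as [r [Hl [Hc Hla]]].
        assert (Hu' : C' u = true).
        { apply (convex_path C' w origin Hcv' Hw HC'0 (u :: r)).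
          - simpl; lia.
          - split; auto. exists i; auto.
          - change (last (u :: r) w = origin). rewrite (last_d _ _ w u); auto.
          - simpl; auto. }
        destruct (manh_adj w i v Hi) as [_ Ha].
        fold u in Ha.
        assert (Hu : C u = true).
        { apply IH; auto.
          - rewrite manh_sym; lia.
          - rewrite (manh_sym origin u). rewrite (manh_sym origin w) in Hwt. lia. }
        assert (HuM : Mset v t C u).
        { split; auto. rewrite !dist_manh; auto.
          rewrite (manh_sym origin u). rewrite (manh_sym origin w) in Hwt. lia. }
        pose proof (bc_comp C C' u (opp i) (Hext2 u HuM)) as E.
        unfold u in E. rewrite padd_opp in E; auto. rewrite E; auto. }
    assert (Hd' : dist C' origin v = dist C origin v).
    { rewrite !dist_manh; auto. }
    unfold equiv', ai. rewrite Hlt. rewrite Hd', Hlt.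
    repeat split; auto; [|discriminate].
    f_equal. apply functional_extensionality. intros [w b]. simpl.
    apply propositional_extensionality. split.
    + intros [Hw [Hwt ->]].
      assert (HwM : Mset v t C w) by (split; auto).
      pose proof (Hext1 w HwM) as Hw'.
      rewrite (dist_manh C') by auto. rewrite (dist_manh C' w v) by auto.
      rewrite (dist_manh C) in Hwt by auto. rewrite (dist_manh C w v) in Hwt by auto.
      repeat split; auto.
    + intros [Hw' [Hwt ->]].
      rewrite (dist_manh C') in Hwt by auto. rewrite (dist_manh C' w v) in Hwt by auto.
      assert (Hw : C w = true) by (eapply Key; eauto).
      assert (HwM : Mset v t C w).
      { split; auto. rewrite !dist_manh; auto. }
      repeat split; auto.
      * rewrite !dist_manh; auto.
      * symmetry; auto.
Qed.
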